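(* Let $p>2$ be the exponent of (P), $\varepsilon\in(0,2)$, $\rho>0$, and $\gamma$ with $1>\gamma\ge\frac2p+\frac\varepsilon2+\frac{\rho}{2p}$, and let $C>0$. Then there is a constant $C_{\rm osc}>0$ independent of $h$ such that every strictly positive $u_h\in U_h$ with $\mathcal E_h(u_h)\le Ch^{-\rho/(2+p)}$ satisfies $$\frac{u_h(x_i,y_j)}{u_h(x_{\hat i},y_{\hat j})}\le C_{\rm osc}$$ for all $i\in\{1,\dots,N_x\}$, $j\in\{1,\dots,N_y\}$, $\hat i\in\{i-1,i,i+1\}$ and $\hat j\in\{j-1,j,j+1\}$ (indices taken periodically).
   Context: Discretization setting. Let $L_x,L_y>0$, $\mathcal O^x=(0,L_x)$, $\mathcal O^y=(0,L_y)$, $\mathcal O=\mathcal O^x\times\mathcal O^y$; all functions are $\mathcal O$-periodic. For $h\in(0,1)$ let $h_x=L_x/N_x$, $h_y=L_y/N_y$ with $\hat c_1h\le h_x,h_y\le\hat C_2h$ for fixed constants $0<\hat c_1\le\hat C_2$ (Assumption (S)). Nodes are $x_i=(i-1)h_x$ and $y_j=(j-1)h_y$, with indices taken periodically. $U_h$ is the space of continuous periodic functions on $\overline{\mathcal O}$ that are bilinear on each rectangle $(x_i,x_{i+1})\times(y_j,y_{j+1})$. $\mathcal I_h^x$ and $\mathcal I_h^y$ are the nodal (piecewise linear) interpolation operators in $x$ and in $y$, each acting in its own variable for fixed value of the other; $\mathcal I_h^{xy}=\mathcal I_h^x\mathcal I_h^y$. For $u_h\in U_h$, $\Delta_hu_h\in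 U_h$ is the discrete Laplacian, given at nodes by the standard five-point formula $\Delta_hu_h=\frac{u_h(x+h_x,y)-2u_h(x,y)+u_h(x-h_x,y)}{h_x^2}+\frac{u_h(x,y+h_y)-2u_h(x,y)+u_h(x,y-h_y)}{h_y^2}$. (P): $F\in C^2((0,\infty))$, $F=+\infty$ on $(-\infty,0]$, and there are $p>2$ and positive constants with $F(u)\ge c_1u^{-p}$, $|F'(u)|\le\hat Cu^{-p-1}+\hat C$, and $\tilde c_1u^{-p-2}-\tilde c_2\le F''(u)\le\tilde Cu^{-p-2}+\tilde C$ for $u>0$. The regularized discrete energy is $$\mathcal E_h(u_h)=\tfrac12\int_{\mathcal O}\big[\mathcal I_h^y(|\partial_xu_h|^2)+\mathcal I_h^x(|\partial_yu_h|^2)\big]+\int_{\mathcal O}\mathcal I_h^{xy}(F(u_h))+\tfrac{h^\varepsilon}{2}\int_{\mathcal O}\mathcal I_h^{xy}(|\Delta_hu_h|^2).$$ *)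

(* Defs.v *)
From Stdlib Require Import Reals Lra Lia.
From Coquelicot Require Import Coquelicot.
Open Scope R_scope.

Fixpoint sum_lt (n : nat) (f : nat -> R) : R :=
  match n with
  | O => 0
  | S m => sum_lt m f + f m
  end.

(* Periodic node indices: nodes are numbered 0..N-1 (the paper uses 1..N),
   and indices are taken modulo N. *)
Definition next (N i : nat) : nat := ((i + 1) mod N)%nat.
Definition prev (N i : nat) : nat := ((i + N - 1) mod N)%nat.

(* Assumption (P) on F (restricted to (0,oo); F = +oo on (-oo,0] is never
   evaluated since u_h > 0). *)
Definition assumption_P (F : R -> R) (p : R) : Prop :=
  (forall x, 0 < x -> ex_derive F x /\ ex_derive (Derive F) x
                      /\ continuous (Derive (Derive F)) x) /\
  exists c1 Ch ct1 ct2 Ct : R,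
    0 < c1 /\ 0 < Ch /\ 0 < ct1 /\ 0 < ct2 /\ 0 < Ct /\
    forall x, 0 < x ->
      c1 * Rpower x (- p) <= F x /\
      Rabs (Derive F x) <= Ch * Rpower x (- p - 1) + Ch /\
      ct1 * Rpower x (- p - 2) - ct2 <= Derive (Derive F) x /\
      Derive (Derive F) x <= Ct * Rpower x (- p - 2) + Ct.

Section Energy.
(* A function u_h in U_h is determined by its nodal values
   u i j = u_h(x_i, y_j), 0 <= i < Nx, 0 <= j < Ny. *)
Variables (Lx Ly : R) (Nx Ny : nat) (F : R -> R) (eps h : R)
          (u : nat -> nat -> R).

Definition hx : R := Lx / INR Nx.
Definition hy : R := Ly / INR Ny.

Definition uv (i j : nat) : R := u (i mod Nx)%nat (j mod Ny)%nat.

(* on cell [x_i,x_{i+1}]x[y_j,y_{j+1}], d_x u_h at y = y_j / d_y u_h at x = x_i *)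
Definition Dx (i j : nat) : R := (uv (i + 1) j - uv i j) / hx.
Definition Dy (i j : nat) : R := (uv i (j + 1) - uv i j) / hy.

Definition lap (i j : nat) : R :=
  (uv (i + 1) j - 2 * uv i j + uv (i + Nx - 1) j) / (hx ^ 2) +
  (uv i (j + 1) - 2 * uv i j + uv i (j + Ny - 1)) / (hy ^ 2).

(* Exact value of the integrand of E_h over the cell (i,j):
   - I_h^y(|d_x u_h|^2) is linear in y between the values (Dx i j)^2 and
     (Dx i (j+1))^2 (d_x u_h is independent of x on the cell);
   - I_h^x(|d_y u_h|^2) likewise in x;
   - I_h^{xy}(g) is bilinear, its cell integral is hx*hy/4 * (sum of corners). *)
Definition cell_energy (i j : nat) : R :=
  / 2 * (hx * hy * ((Dx i j) ^ 2 + (Dx i (j + 1)) ^ 2) / 2)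
  + / 2 * (hx * hy * ((Dy i j) ^ 2 + (Dy (i + 1) j) ^ 2) / 2)
  + hx * hy * (F (uv i j) + F (uv (i + 1) j) + F (uv i (j + 1))
               + F (uv (i + 1) (j + 1))) / 4
  + Rpower h eps / 2 *
      (hx * hy * ((lap i j) ^ 2 + (lap (i + 1) j) ^ 2 + (lap i (j + 1)) ^ 2
                  + (lap (i + 1) (j + 1)) ^ 2) / 4).

Definition energy : R :=
  sum_lt Nx (fun i => sum_lt Ny (fun j => cell_energy i j)).

End Energy.

(* Main.v *)
Require Import Defs.
From Stdlib Require Import Reals Lra Lia Psatz.
From Coquelicot Require Import Coquelicot.
Open Scope R_scope.

Lemma exp_le_inv' x y : exp x <= exp y -> x <= y.
Proof. intros H. rewrite <- (ln_exp x), <- (ln_exp y). apply ln_le; auto. apply exp_pos. Qed.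

Definition Kc (a b c1 Cc p : R) : R :=
  exp ((ln (b^4) + ln Cc - ln (a*a/8) - (2/p)*(ln (a*a*c1/4) - ln Cc))/2).

Lemma core (a b c1 Cc p eps q h hx hy ub L : R) :
 0<a -> a<=b -> 0<c1 -> 0<Cc -> 2<p -> 0<q ->
 0 <= 1 - eps/2 - q/2 - (2+q)/p -> 0<h<1 ->
 a*h <= hx <= b*h -> a*h <= hy <= b*h -> 0<ub ->
 hx*hy*(c1*Rpower ub (-p))/4 <= Cc*Rpower h (-q) ->
 Rpower h eps/2*(hx*hy*L^2/4) <= Cc*Rpower h (-q) ->
 b^2*h^2*Rabs L <= Kc a b c1 Cc p * ub.
Proof.
  intros Ha Hab Hc1 HCc Hp Hq He Hh Hx Hy Hu H1 H2.
  assert (Hb : 0 < b) by lra.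
  assert (Hhxy : a*h*(a*h) <= hx*hy).
  { apply Rmult_le_compat; nra. }
  set (lh := ln h). set (lu := ln ub).
  assert (Eh : h = exp lh) by (unfold lh; rewrite exp_ln; lra).
  assert (Eu : ub = exp lu) by (unfold lu; rewrite exp_ln; lra).
  unfold Rpower in H1, H2.
  set (al := ln (a*a*c1/4)).
  assert (A1 : al + 2*lh + -p*lu <= ln Cc + -q*lh).
  { apply exp_le_inv'. rewrite !exp_plus, exp_ln by lra.
    unfold al; rewrite exp_ln by (apply Rmult_lt_0_compat; [|lra]; apply Rmult_lt_0_compat; nra).
    replace (2*lh) with (lh+lh) by ring. rewrite exp_plus, <- Eh.
    replace (-p*lu) with (-p * ln ub) by reflexivity.
    replace (-q*lh) with (-q * ln h) by reflexivity.
    eapply Rle_trans; [|exact H1].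
    assert (0 < exp (- p * ln ub)) by apply exp_pos. set (E := exp (- p * ln ub)) in *.
    replace (a * a * c1 / 4 * (h * h) * E) with (a*h*(a*h)*(c1*E/4)) by field.
    replace (hx * hy * (c1 * E) / 4) with (hx*hy*(c1*E/4)) by field.
    apply Rmult_le_compat_r; [|exact Hhxy]. apply Rlt_le. apply Rmult_lt_0_compat; [apply Rmult_lt_0_compat|]; lra. }
  assert (A1' : (al - ln Cc)/p + (2+q)/p*lh <= lu).
  { apply Rmult_le_reg_l with p; [lra|].
    replace (p * ((al - ln Cc) / p + (2 + q) / p * lh)) with (al - ln Cc + (2+q)*lh) by (field; lra).
    lra. }
  assert (A3 : (1 - eps/2 - q/2 - (2+q)/p) * lh <= 0).
  { assert (lh < 0). { unfold lh. rewrite <- ln_1. apply ln_increasing; lra. }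
    nra. }
  destruct (Req_dec L 0) as [HL|HL].
  { subst L. rewrite Rabs_R0. unfold Kc. assert (0 < exp (( ln (b ^ 4) + ln Cc - ln (a * a / 8) - 2 / p * (ln (a * a * c1 / 4) - ln Cc)) / 2)) by apply exp_pos. nra. }
  set (lL := ln (L^2)).
  assert (HL2 : 0 < L^2) by (apply pow2_gt_0; auto).
  assert (EL : L^2 = exp lL) by (unfold lL; rewrite exp_ln; lra).
  assert (A2 : ln (a*a/8) + eps*lh + 2*lh + lL <= ln Cc + -q*lh).
  { apply exp_le_inv'. rewrite !exp_plus. rewrite (exp_ln (a*a/8)) by nra. rewrite (exp_ln Cc) by lra.
    replace (2*lh) with (lh+lh) by ring. rewrite exp_plus, <- Eh, <- EL.
    replace (-q*lh) with (-q * ln h) by reflexivity.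
    replace (eps*lh) with (eps * ln h) by reflexivity.
    eapply Rle_trans; [|exact H2].
    assert (0 < exp (eps * ln h)) by apply exp_pos. set (E := exp (eps * ln h)) in *.
    replace (a * a / 8 * E * (h * h) * L ^ 2) with (a*h*(a*h)*(E*L^2/8)) by field.
    replace (E / 2 * (hx * hy * L ^ 2 / 4)) with (hx*hy*(E*L^2/8)) by field.
    apply Rmult_le_compat_r; [|exact Hhxy]. apply Rlt_le. apply Rmult_lt_0_compat; [apply Rmult_lt_0_compat|]; lra. }
  assert (G : ln (b^4) + 4*lh + lL <= 2 * ((ln (b^4) + ln Cc - ln (a*a/8) - (2/p)*(al - ln Cc))/2) + 2*lu).
  { assert (E2 : (2 / p) * (al - ln Cc) = 2 * ((al - ln Cc)/p)) by (field; lra).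
    assert (E3 : (2+q)/p*lh = 2*/p*lh + q*/p*lh) by (field; lra).
    assert (E4 : (1 - eps/2 - q/2 - (2+q)/p) * lh = lh - eps*lh/2 - q*lh/2 - (2*/p*lh + q*/p*lh)) by (field; lra).
    lra. }
  assert (Hsq : (b^2*h^2*Rabs L)^2 <= (Kc a b c1 Cc p * ub)^2).
  { replace ((b^2*h^2*Rabs L)^2) with (exp (ln (b^4) + 4*lh + lL)).
    2:{ rewrite !exp_plus, exp_ln by (apply pow_lt; lra). rewrite <- EL.
        replace (4*lh) with (lh+lh+lh+lh) by ring. rewrite !exp_plus, <- Eh.
        rewrite <- (pow2_abs L). ring. }
    replace ((Kc a b c1 Cc p * ub)^2) with (exp (2 * ((ln (b^4) + ln Cc - ln (a*a/8) - (2/p)*(al - ln Cc))/2) + 2*lu)).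
    2:{ unfold Kc. fold al. rewrite Eu.
        set (z := (ln (b ^ 4) + ln Cc - ln (a * a / 8) - 2 / p * (al - ln Cc)) / 2).
        replace (2*z + 2*lu) with (z+z+(lu+lu)) by ring. rewrite !exp_plus. ring. }
    destruct (Rle_lt_or_eq_dec _ _ G) as [G'|G'].
    - left. apply exp_increasing; auto.
    - rewrite G'; lra. }
  assert (0 <= Kc a b c1 Cc p * ub). { unfold Kc. assert (0 < exp (( ln (b ^ 4) + ln Cc - ln (a * a / 8) - 2 / p * (ln (a * a * c1 / 4) - ln Cc)) / 2)) by apply exp_pos. nra. }
  assert (0 <= b^2*h^2*Rabs L). { assert (0 <= Rabs L) by apply Rabs_pos. assert (0 <= b^2*h^2) by nra. nra. }
  nra.
Qed.

Lemma sum_lt_nonneg n f : (forall k, (k < n)%nat -> 0 <= f k) -> 0 <= sum_lt n f.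
Proof. induction n; simpl; intros H. lra. assert (0 <= f n) by (apply H; lia).
  assert (0 <= sum_lt n f) by (apply IHn; intros; apply H; lia). lra. Qed.

Lemma sum_lt_ge n f k : (forall k, (k < n)%nat -> 0 <= f k) -> (k < n)%nat -> f k <= sum_lt n f.
Proof. induction n; simpl; intros H Hk. lia.
  assert (0 <= f n) by (apply H; lia).
  assert (0 <= sum_lt n f) by (apply sum_lt_nonneg; intros; apply H; lia).
  destruct (Nat.eq_dec k n). subst; lra.
  assert (f k <= sum_lt n f) by (apply IHn; [intros; apply H; lia| lia]). lra. Qed.

Lemma prev_succ N i : (i < N)%nat -> ((prev N i + 1) mod N = i)%nat.
Proof. intros. unfold prev. rewrite Nat.add_mod_idemp_l by lia.
  replace (i+N-1+1)%nat with (i + 1*N)%nat by lia. rewrite Nat.mod_add by lia. apply Nat.mod_small; auto. Qed.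

Lemma next_pred N i : (i < N)%nat -> ((next N i + N - 1) mod N = i)%nat.
Proof. intros. unfold next. replace ((i+1) mod N + N - 1)%nat with ((i+1) mod N + (N-1))%nat by lia.
  rewrite Nat.add_mod_idemp_l by lia. replace (i+1+(N-1))%nat with (i + 1*N)%nat by lia.
  rewrite Nat.mod_add by lia. apply Nat.mod_small; auto. Qed.

Lemma nb1 N i ih : (i < N)%nat -> (ih = prev N i \/ ih = i \/ ih = next N i) ->
  (ih < N)%nat /\ (i = ih \/ i = ((ih+1) mod N)%nat \/ i = ((ih+N-1) mod N)%nat).
Proof. intros Hi [H|[H|H]]; subst.
  - split. apply Nat.mod_upper_bound; lia. right; left. symmetry; apply prev_succ; auto.
  - split; auto.
  - split. apply Nat.mod_upper_bound; lia. right; right. symmetry; apply next_pred; auto. Qed.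

Lemma ratio_le a b h x y : 0 < a -> 0 < h -> a*h <= x -> 0 <= y <= b*h -> y^2/x^2 <= b^2/a^2.
Proof. intros Ha Hh Hx Hy.
  assert (0 < x) by (apply Rlt_le_trans with (a*h); [apply Rmult_lt_0_compat|]; lra).
  assert (y*a <= b*x). { apply Rle_trans with (b*h*a). apply Rmult_le_compat_r; lra.
    replace (b*h*a) with (b*(a*h)) by ring. apply Rmult_le_compat_l; [|lra].
    assert (0 <= b*h) by lra. apply Rmult_le_reg_r with h; lra. }
  assert (Hd : y/x <= b/a). { apply Rmult_le_reg_r with (x*a). apply Rmult_lt_0_compat; lra.
    replace (y/x*(x*a)) with (y*a) by (field; lra). replace (b/a*(x*a)) with (b*x) by (field; lra). lra. }
  assert (0 <= y/x) by (unfold Rdiv; apply Rmult_le_pos; [lra| left; apply Rinv_0_lt_compat; lra]).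
  replace (y^2/x^2) with ((y/x)^2) by (field; lra). replace (b^2/a^2) with ((b/a)^2) by (field; lra).
  apply pow_incr; lra. Qed.

Lemma stencil hx hy A1 A2 B1 B2 ub L K r0 : 0<hx -> 0<hy -> 0<=A2 -> 0<=B1 -> 0<=B2 -> 0<ub ->
  L = (A1+A2-2*ub)/hx^2 + (B1+B2-2*ub)/hy^2 -> hx^2*Rabs L <= K*ub -> hx^2/hy^2 <= r0 ->
  A1 <= (K + 2 + 2*r0)*ub.
Proof. intros Hx Hy HA2 HB1 HB2 Hu HL HK Hr.
  set (r := hx^2/hy^2) in *.
  assert (Hr0 : 0 <= r) by (unfold r, Rdiv; apply Rmult_le_pos; [apply pow2_ge_0| left; apply Rinv_0_lt_compat, pow_lt; lra]).
  assert (E : hx^2*L = A1+A2-2*ub + r*(B1+B2-2*ub)) by (rewrite HL; unfold r; field; lra).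
  assert (hx^2*L <= hx^2*Rabs L) by (apply Rmult_le_compat_l; [apply pow2_ge_0|apply Rle_abs]).
  assert (0 <= r*B1) by (apply Rmult_le_pos; lra).
  assert (0 <= r*B2) by (apply Rmult_le_pos; lra).
  assert (r*ub <= r0*ub) by (apply Rmult_le_compat_r; lra).
  assert (E2 : r*(B1+B2-2*ub) = r*B1 + r*B2 - 2*(r*ub)) by ring.
  assert (E3 : (K + 2 + 2*r0)*ub = K*ub + 2*ub + 2*(r0*ub)) by ring.
  lra. Qed.

Lemma cell_bounds Lx Ly Nx Ny F eps h u c1 p i j :
  (forall x, 0<x -> c1*Rpower x (-p) <= F x) -> 0<c1 -> 0 < hx Lx Nx -> 0 < hy Ly Ny -> 0 < h ->
  (forall i j, 0 < uv Nx Ny u i j) ->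
  0 <= cell_energy Lx Ly Nx Ny F eps h u i j /\
  hx Lx Nx * hy Ly Ny * (c1*Rpower (uv Nx Ny u i j) (-p))/4 <= cell_energy Lx Ly Nx Ny F eps h u i j /\
  Rpower h eps/2*(hx Lx Nx * hy Ly Ny*(lap Lx Ly Nx Ny u i j)^2/4) <= cell_energy Lx Ly Nx Ny F eps h u i j.
Proof.
  intros HF Hc1 Hx Hy Hh Hu.
  assert (Fp : forall i j, c1*Rpower (uv Nx Ny u i j) (-p) <= F (uv Nx Ny u i j) /\ 0 < c1*Rpower (uv Nx Ny u i j) (-p)).
  { intros. split. apply HF, Hu. apply Rmult_lt_0_compat; auto. unfold Rpower; apply exp_pos. }
  unfold cell_energy.
  set (P := hx Lx Nx * hy Ly Ny). assert (HP : 0 < P) by (apply Rmult_lt_0_compat; auto).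
  assert (HR : 0 < Rpower h eps) by (unfold Rpower; apply exp_pos).
  destruct (Fp i j) as [F1 F1'].
  destruct (Fp (i+1)%nat j) as [F2 F2'].
  destruct (Fp i (j+1)%nat) as [F3 F3'].
  destruct (Fp (i+1)%nat (j+1)%nat) as [F4 F4'].
  set (a1 := / 2 * (P * ((Defs.Dx Lx Nx Ny u i j)^2 + (Defs.Dx Lx Nx Ny u i (j+1))^2) / 2)).
  set (a2 := / 2 * (P * ((Defs.Dy Ly Nx Ny u i j)^2 + (Defs.Dy Ly Nx Ny u (i+1) j)^2) / 2)).
  set (l := lap Lx Ly Nx Ny u).
  assert (0 <= a1). { unfold a1. apply Rmult_le_pos; [lra|]. unfold Rdiv; apply Rmult_le_pos; [|lra].
    apply Rmult_le_pos; [lra|]. apply Rplus_le_le_0_compat; apply pow2_ge_0. }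
  assert (0 <= a2). { unfold a2. apply Rmult_le_pos; [lra|]. unfold Rdiv; apply Rmult_le_pos; [|lra].
    apply Rmult_le_pos; [lra|]. apply Rplus_le_le_0_compat; apply pow2_ge_0. }
  assert (T3 : P * (c1 * Rpower (uv Nx Ny u i j) (- p)) / 4 <=
     P * (F (uv Nx Ny u i j) + F (uv Nx Ny u (i + 1) j) + F (uv Nx Ny u i (j + 1)) + F (uv Nx Ny u (i + 1) (j + 1))) / 4).
  { unfold Rdiv. apply Rmult_le_compat_r; [lra|]. apply Rmult_le_compat_l; lra. }
  assert (T3' : 0 <= P * (c1 * Rpower (uv Nx Ny u i j) (- p)) / 4).
  { unfold Rdiv. apply Rmult_le_pos; [|lra]. apply Rmult_le_pos; lra. }
  assert (T4 : Rpower h eps / 2 * (P * l i j ^ 2 / 4) <=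
    Rpower h eps / 2 * (P * (l i j ^ 2 + l (i + 1)%nat j ^ 2 + l i (j + 1)%nat ^ 2 + l (i + 1)%nat (j + 1)%nat ^ 2) / 4)).
  { apply Rmult_le_compat_l. unfold Rdiv; apply Rmult_le_pos; lra.
    unfold Rdiv. apply Rmult_le_compat_r; [lra|]. apply Rmult_le_compat_l; [lra|].
    pose proof (pow2_ge_0 (l i j)). pose proof (pow2_ge_0 (l (i+1)%nat j)).
    pose proof (pow2_ge_0 (l i (j+1)%nat)). pose proof (pow2_ge_0 (l (i+1)%nat (j+1)%nat)). lra. }
  assert (T4' : 0 <= Rpower h eps / 2 * (P * l i j ^ 2 / 4)).
  { unfold Rdiv. apply Rmult_le_pos. apply Rmult_le_pos; lra. apply Rmult_le_pos; [|lra].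
    apply Rmult_le_pos; [lra|apply pow2_ge_0]. }
  split; [|split]; lra.
Qed.

Theorem lemma3p4 (Lx Ly c1hat C2hat : R) (F : R -> R)
  (p eps rho gamma C : R) :
  0 < Lx -> 0 < Ly -> 0 < c1hat -> c1hat <= C2hat ->
  2 < p -> assumption_P F p ->
  0 < eps < 2 -> 0 < rho ->
  gamma < 1 -> 2 / p + eps / 2 + rho / (2 * p) <= gamma ->
  0 < C ->
  exists Cosc : R, 0 < Cosc /\
    forall (h : R) (Nx Ny : nat) (u : nat -> nat -> R),
      0 < h < 1 ->
      (0 < Nx)%nat -> (0 < Ny)%nat ->
      c1hat * h <= hx Lx Nx <= C2hat * h ->
      c1hat * h <= hy Ly Ny <= C2hat * h ->
      (forall i j, (i < Nx)%nat -> (j < Ny)%nat -> 0 < u i j) ->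
      energy Lx Ly Nx Ny F eps h u <= C * Rpower h (- (rho / (2 + p))) ->
      forall i j ih jh : nat,
        (i < Nx)%nat -> (j < Ny)%nat ->
        (ih = prev Nx i \/ ih = i \/ ih = next Nx i) ->
        (jh = prev Ny j \/ jh = j \/ jh = next Ny j) ->
        u i j / u ih jh <= Cosc.
Proof.
  intros HLx HLy Ha Hab Hp HPF Heps Hrho Hg1 Hg HC.
  destruct HPF as [_ [c1 [Ch [ct1 [ct2 [Ct [Hc1 [_ [_ [_ [_ HPx]]]]]]]]]]].
  set (q := rho/(2+p)).
  set (K := Kc c1hat C2hat c1 C p).
  set (r0 := C2hat^2/c1hat^2).
  set (M := K + 2 + 2*r0).
  assert (HK : 0 < K) by (unfold K, Kc; apply exp_pos).
  assert (Hr0 : 0 <= r0) by (unfold r0, Rdiv; apply Rmult_le_pos; [apply pow2_ge_0| left; apply Rinv_0_lt_compat, pow_lt; lra]).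
  assert (HM : 1 <= M) by (unfold M; lra).
  assert (Hq : 0 < q) by (unfold q; apply Rdiv_lt_0_compat; lra).
  assert (Hexp : 0 <= 1 - eps/2 - q/2 - (2+q)/p).
  { assert (q/2 + (2+q)/p = 2/p + rho/(2*p)) by (unfold q; field; lra). lra. }
  exists (M*M). split. nra.
  intros h Nx Ny u Hh HNx HNy Hhx Hhy Hu HE i j ih jh Hi Hj Hih Hjh.
  assert (Hx0 : 0 < hx Lx Nx). { apply Rlt_le_trans with (c1hat*h); [apply Rmult_lt_0_compat|]; lra. }
  assert (Hy0 : 0 < hy Ly Ny). { apply Rlt_le_trans with (c1hat*h); [apply Rmult_lt_0_compat|]; lra. }
  assert (Huv : forall i j, 0 < uv Nx Ny u i j).
  { intros. unfold uv. apply Hu; apply Nat.mod_upper_bound; lia. }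
  assert (cb := fun i j => cell_bounds Lx Ly Nx Ny F eps h u c1 p i j (fun x Hx => proj1 (HPx x Hx)) Hc1 Hx0 Hy0 (proj1 Hh) Huv).
  assert (Hcell : forall bi bj, (bi < Nx)%nat -> (bj < Ny)%nat -> cell_energy Lx Ly Nx Ny F eps h u bi bj <= energy Lx Ly Nx Ny F eps h u).
  { intros bi bj Hbi Hbj. unfold energy.
    apply Rle_trans with (sum_lt Ny (fun j => cell_energy Lx Ly Nx Ny F eps h u bi j)).
    - apply (sum_lt_ge Ny (fun j => cell_energy Lx Ly Nx Ny F eps h u bi j) bj); [intros; apply cb|auto].
    - apply (sum_lt_ge Nx (fun i => sum_lt Ny (fun j => cell_energy Lx Ly Nx Ny F eps h u i j)) bi); [|auto].
      intros; apply sum_lt_nonneg; intros; apply cb. }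
  assert (Node : forall bi bj, (bi < Nx)%nat -> (bj < Ny)%nat ->
    u ((bi+1) mod Nx)%nat bj <= M*u bi bj /\ u ((bi+Nx-1) mod Nx)%nat bj <= M*u bi bj /\
    u bi ((bj+1) mod Ny)%nat <= M*u bi bj /\ u bi ((bj+Ny-1) mod Ny)%nat <= M*u bi bj).
  { intros bi bj Hbi Hbj.
    assert (Eub : uv Nx Ny u bi bj = u bi bj) by (unfold uv; rewrite !Nat.mod_small; auto).
    destruct (cb bi bj) as [_ [C1 C2]].
    pose proof (Hcell bi bj Hbi Hbj) as He.
    set (ub := uv Nx Ny u bi bj) in *.
    set (L := lap Lx Ly Nx Ny u bi bj) in *.
    assert (Hcore : C2hat^2*h^2*Rabs L <= K*ub).
    { apply (core c1hat C2hat c1 C p eps q h (hx Lx Nx) (hy Ly Ny)); auto; try lra. apply Huv. }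
    assert (HRL : 0 <= Rabs L) by apply Rabs_pos.
    assert (Hx2 : hx Lx Nx ^2 <= C2hat^2*h^2).
    { replace (C2hat^2*h^2) with ((C2hat*h)^2) by ring. apply pow_incr; lra. }
    assert (Hy2 : hy Ly Ny ^2 <= C2hat^2*h^2).
    { replace (C2hat^2*h^2) with ((C2hat*h)^2) by ring. apply pow_incr; lra. }
    assert (Kx : hx Lx Nx^2*Rabs L <= K*ub).
    { eapply Rle_trans; [|exact Hcore]. apply Rmult_le_compat_r; lra. }
    assert (Ky : hy Ly Ny^2*Rabs L <= K*ub).
    { eapply Rle_trans; [|exact Hcore]. apply Rmult_le_compat_r; lra. }
    assert (Rx : hx Lx Nx^2/hy Ly Ny^2 <= r0) by (apply (ratio_le c1hat C2hat h); lra).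
    assert (Ry : hy Ly Ny^2/hx Lx Nx^2 <= r0) by (apply (ratio_le c1hat C2hat h); lra).
    set (A1 := uv Nx Ny u (bi+1) bj). set (A2 := uv Nx Ny u (bi+Nx-1) bj).
    set (B1 := uv Nx Ny u bi (bj+1)). set (B2 := uv Nx Ny u bi (bj+Ny-1)).
    assert (hxn : hx Lx Nx <> 0) by lra. assert (hyn : hy Ly Ny <> 0) by lra.
    assert (L1 : L = (A1+A2-2*ub)/hx Lx Nx^2 + (B1+B2-2*ub)/hy Ly Ny^2) by (unfold L, lap; fold A1 A2 B1 B2 ub; field; tauto).
    assert (L2 : L = (A2+A1-2*ub)/hx Lx Nx^2 + (B1+B2-2*ub)/hy Ly Ny^2) by (rewrite L1; field; tauto).
    assert (L3 : L = (B1+B2-2*ub)/hy Ly Ny^2 + (A1+A2-2*ub)/hx Lx Nx^2) by (rewrite L1; field; tauto).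
    assert (L4 : L = (B2+B1-2*ub)/hy Ly Ny^2 + (A1+A2-2*ub)/hx Lx Nx^2) by (rewrite L1; field; tauto).
    assert (PA1 := Huv (bi+1)%nat bj). assert (PA2 := Huv (bi+Nx-1)%nat bj).
    assert (PB1 := Huv bi (bj+1)%nat). assert (PB2 := Huv bi (bj+Ny-1)%nat).
    fold A1 A2 B1 B2 in PA1, PA2, PB1, PB2.
    assert (HUb : 0 < ub) by apply Huv.
    pose proof (stencil _ _ A1 A2 B1 B2 ub L K r0 Hx0 Hy0 ltac:(lra) ltac:(lra) ltac:(lra) HUb L1 Kx Rx) as S1.
    pose proof (stencil _ _ A2 A1 B1 B2 ub L K r0 Hx0 Hy0 ltac:(lra) ltac:(lra) ltac:(lra) HUb L2 Kx Rx) as S2.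
    pose proof (stencil _ _ B1 B2 A1 A2 ub L K r0 Hy0 Hx0 ltac:(lra) ltac:(lra) ltac:(lra) HUb L3 Ky Ry) as S3.
    pose proof (stencil _ _ B2 B1 A1 A2 ub L K r0 Hy0 Hx0 ltac:(lra) ltac:(lra) ltac:(lra) HUb L4 Ky Ry) as S4.
    fold M in S1, S2, S3, S4. rewrite Eub in S1, S2, S3, S4.
    unfold A1, A2, B1, B2, uv in S1, S2, S3, S4.
    rewrite (Nat.mod_small bj) in S1, S2 by auto.
    rewrite (Nat.mod_small bi) in S3, S4 by auto.
    auto. }
  destruct (nb1 Ny j jh Hj Hjh) as [Hjh' Hjc].
  destruct (nb1 Nx i ih Hi Hih) as [Hih' Hic].
  assert (Pu1 : 0 < u i jh) by auto. assert (Pu2 : 0 < u ih jh) by auto.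
  assert (S1 : u i j <= M * u i jh).
  { destruct Hjc as [E|[E|E]]; rewrite E.
    - nra.
    - apply (Node i jh Hi Hjh').
    - apply (Node i jh Hi Hjh'). }
  assert (S2 : u i jh <= M * u ih jh).
  { destruct Hic as [E|[E|E]]; rewrite E.
    - nra.
    - apply (Node ih jh Hih' Hjh').
    - apply (Node ih jh Hih' Hjh'). }
  assert (S3 : u i j <= M*M*u ih jh).
  { eapply Rle_trans; [exact S1|]. rewrite Rmult_assoc. apply Rmult_le_compat_l; lra. }
  apply Rmult_le_reg_r with (u ih jh); auto.
  unfold Rdiv. rewrite Rmult_assoc, Rinv_l by lra. lra.
Qed.
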